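(* Let $d \ge 1$ and let $N_0, \ldots, N_{d-1}$ be positive integers (the extents of the dimensions of an iteration space, ordered by a fixed loop order). For each $m \in \{0,\ldots,d-1\}$ and each prefix $\bar{x}_m = (x_0,\ldots,x_{m-1})$ with $x_k \in \{0,\ldots,N_k-1\}$, let $\mathbf{C}_m(\,\cdot \mid \bar{x}_m) : \{0,1,\ldots,N_m\} \to \mathbb{R}_{\ge 0}$ be a cost function satisfying: (i) $\mathbf{C}_m(0 \mid \bar{x}_m) = 0$; (ii) (monotonicity) $\mathbf{C}_m(x \mid \bar{x}_m) \le \mathbf{C}_m(x+1 \mid \bar{x}_m)$ for all $0 \le x < N_m$; (iii) (hierarchical consistency) for every $m < d-1$ and every $x_m \in \{0,\ldots,N_m-1\}$, $\mathbf{C}_m(x_m+1 \mid \bar{x}_m) = \mathbf{C}_m(x_m \mid \bar{x}_m) + \mathbf{C}_{m+1}(N_{m+1} \mid \bar{x}_m, x_m)$. Define $\Delta_{d-1} = \max\big(\mathbf{C}_{d-1}(x+1 \mid \bar{x}_{d-1}) - \mathbf{C}_{d-1}(x \mid \bar{x}_{d-1})\big)$, the maximum taken over all prefixes $\bar{x}_{d-1}$ and all $0 \le x < N_{d-1}$. Let $\mathcal{Q}$ be a query cost with $0 \le \mathcal{Q} < \mathbf{C}_0(N_0)$, and let $\bar{x} = (x_0,\ldots,x_{d-1})$ be the output of the following procedure: set $\mathcal{R}_0 = \mathcal{Q}$; for $m = 0,1,\ldots,d-1$ in order, let $x_m$ be the largest $x \in \{0,\ldots,N_m-1\}$ with $\mathbf{C}_m(x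 \mid x_0,\ldots,x_{m-1}) \le \mathcal{R}_m$, and set $\mathcal{R}_{m+1} = \mathcal{R}_m - \mathbf{C}_m(x_m \mid x_0,\ldots,x_{m-1})$. Then, writing $\mathbf{C}(\bar{x}) = \sum_{m=0}^{d-1} \mathbf{C}_m(x_m \mid x_0,\ldots,x_{m-1})$, we have $0 \le \mathcal{Q} - \mathbf{C}(\bar{x}) < \Delta_{d-1}$.
   Context: $\mathbf{C}_m(x \mid x_0,\ldots,x_{m-1})$ models the cost of coiterating, in lexicographic order of the $d$-dimensional iteration space, from coordinate $(x_0,\ldots,x_{m-1},0,\ldots,0)$ up to (but excluding) coordinate $(x_0,\ldots,x_{m-1},x,0,\ldots,0)$; i.e. the cost of the subspace with the first $m$ coordinates fixed, the $m$-th coordinate in $[0,x)$, and all later coordinates ranging over their full extents. $\mathbf{C}(\bar{x})$ is then the total cost of coiteration from $(0,\ldots,0)$ to $\bar{x}$. The procedure in the claim is the ''hierarchical search partitioning'' algorithm, a per-dimension binary search for a coordinate whose prefix cost is at most the remaining query cost. *)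

(* Defs.v *)
From mathcomp Require Import all_boot all_order all_algebra.
From mathcomp Require Import reals.
Set Implicit Arguments. Unset Strict Implicit. Unset Printing Implicit Defensive.
Import Order.TTheory GRing.Theory Num.Theory.
Local Open Scope ring_scope.

(* Extents: N : nat -> nat (only N 0, ..., N (d-1) matter).
   A prefix (x_0,...,x_{m-1}) is a seq nat of size m.
   Cost functions: C m p x  =  C_m(x | p). *)

Definition valid_prefix (N : nat -> nat) (p : seq nat) : Prop :=
  forall k, (k < size p)%N -> (nth 0%N p k < N k)%N.

Fixpoint prefixes (N : nat -> nat) (m : nat) : seq (seq nat) :=
  match m with
  | 0 => [:: [::]]
  | m'.+1 => [seq rcons p x | p <- prefixes N m', x <- iota 0 (N m')]
  end.

(* Largest x in {0,...,n-1} with f x <= r (0 if none). *)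
Fixpoint lastle {R : realType} (f : nat -> R) (n : nat) (r : R) : nat :=
  match n with
  | 0 => 0%N
  | n'.+1 => if f n' <= r then n' else lastle f n' r
  end.

(* Hierarchical search partitioning: state after k steps = (x_0..x_{k-1}, R_k). *)
Fixpoint hsp_state {R : realType} (N : nat -> nat)
    (C : nat -> seq nat -> nat -> R) (Q : R) (k : nat) : seq nat * R :=
  match k with
  | 0 => ([::], Q)
  | k'.+1 =>
      let (p, r) := hsp_state N C Q k' in
      let x := lastle (C k' p) (N k') r in
      (rcons p x, r - C k' p x)
  end.

Definition hsp {R : realType} N (C : nat -> seq nat -> nat -> R) Q d : seq nat :=
  (hsp_state N C Q d).1.

Definition total_cost {R : realType} (C : nat -> seq nat -> nat -> R)
    (d : nat) (xs : seq nat) : R :=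
  \sum_(m < d) C m (take m xs) (nth 0%N xs m).

Definition Delta_last {R : realType} (N : nat -> nat)
    (C : nat -> seq nat -> nat -> R) (d : nat) : R :=
  \big[Num.max/0]_(p <- prefixes N d.-1)
    \big[Num.max/0]_(x <- iota 0 (N d.-1))
      (C d.-1 p x.+1 - C d.-1 p x).

(* Main.v *)
Require Import Defs.
From mathcomp Require Import all_boot all_order all_algebra.
From mathcomp Require Import reals.
From mathcomp Require Import lra.
Import Order.TTheory GRing.Theory Num.Theory.
Local Open Scope ring_scope.

Lemma lastle_spec (R : realType) (f : nat -> R) (n : nat) (r : R) :
  f 0%N <= r -> r < f n ->
  [/\ (lastle f n r < n)%N, f (lastle f n r) <= r & r < f (lastle f n r).+1].
Proof.
move=> h0; elim: n => [|n IH] /=.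
  by move=> h; have := lt_le_trans h h0; rewrite ltxx.
move=> hn; case: ifP => h; first by split.
have hl : r < f n by rewrite ltNge h.
by case: (IH hl) => a b c; split => //; apply: ltnW.
Qed.

Lemma hsp_stateS (R : realType) N (C : nat -> seq nat -> nat -> R) Q k :
  hsp_state N C Q k.+1 =
  (rcons (hsp_state N C Q k).1 (lastle (C k (hsp_state N C Q k).1) (N k) (hsp_state N C Q k).2),
   (hsp_state N C Q k).2 - C k (hsp_state N C Q k).1
      (lastle (C k (hsp_state N C Q k).1) (N k) (hsp_state N C Q k).2)).
Proof. by rewrite /=; case: (hsp_state N C Q k). Qed.

Lemma valid_rcons N p x : valid_prefix N p -> (x < N (size p))%N ->
  valid_prefix N (rcons p x).
Proof.
move=> hv hx k; rewrite size_rcons ltnS nth_rcons leq_eqVlt.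
case/orP=> [/eqP->|hk]; first by rewrite ltnn eqxx.
by rewrite hk; apply: hv.
Qed.

Lemma valid_mem N p : valid_prefix N p -> p \in prefixes N (size p).
Proof.
elim/last_ind: p => [|p x IH] hv; first by rewrite /= inE.
rewrite size_rcons /=.
have hp : valid_prefix N p.
  by move=> k hk; have := hv k; rewrite size_rcons nth_rcons hk => /(_ (ltnW _)); apply.
have hx : (x < N (size p))%N.
  by have := hv (size p); rewrite size_rcons nth_rcons ltnn eqxx; apply.
apply: (allpairs_f (fun p x => rcons p x)); first exact: IH.
by rewrite mem_iota.
Qed.

Lemma le_bigmax_seq0 (R : realType) (T : eqType) (s : seq T) (F : T -> R) t :
  t \in s -> F t <= \big[Num.max/0]_(i <- s) F i.
Proof.
elim: s => [|a s IH] //; rewrite inE big_cons => /orP[/eqP->|h].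
  by rewrite le_max lexx.
by rewrite le_max (IH h) orbT.
Qed.

Theorem theorem1 (R : realType) (d : nat) (N : nat -> nat)
    (C : nat -> seq nat -> nat -> R) (Q : R) :
  (0 < d)%N ->
  (forall k, (k < d)%N -> (0 < N k)%N) ->
  (forall m p x, (m < d)%N -> size p = m -> valid_prefix N p ->
     (x <= N m)%N -> 0 <= C m p x) ->
  (forall m p, (m < d)%N -> size p = m -> valid_prefix N p -> C m p 0%N = 0) ->
  (forall m p x, (m < d)%N -> size p = m -> valid_prefix N p ->
     (x < N m)%N -> C m p x <= C m p x.+1) ->
  (forall m p x, (m.+1 < d)%N -> size p = m -> valid_prefix N p ->
     (x < N m)%N ->
     C m p x.+1 = C m p x + C m.+1 (rcons p x) (N m.+1)) ->
  0 <= Q -> Q < C 0%N [::] (N 0%N) ->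
  0 <= Q - total_cost C d (hsp N C Q d) /\
  Q - total_cost C d (hsp N C Q d) < Delta_last N C d.
Proof.
move=> hd hN hC0 hz hmon hcons hQ hQC.
set S := hsp_state N C Q.
have step : forall k, (k < d)%N ->
  size (S k).1 = k -> valid_prefix N (S k).1 ->
  Q - (S k).2 = \sum_(m < k) C m (take m (S k).1) (nth 0%N (S k).1 m) ->
  0 <= (S k).2 -> (S k).2 < C k (S k).1 (N k) ->
  [/\ size (S k.+1).1 = k.+1, valid_prefix N (S k.+1).1,
      Q - (S k.+1).2 = \sum_(m < k.+1) C m (take m (S k.+1).1) (nth 0%N (S k.+1).1 m),
      0 <= (S k.+1).2 &
      exists x, [/\ (S k.+1).1 = rcons (S k).1 x, (x < N k)%N &
                 (S k.+1).2 < C k (S k).1 x.+1 - C k (S k).1 x]].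
  move=> k hk hs hv hsum h0 hlt.
  rewrite /S hsp_stateS -/S.
  set p := (S k).1; set r := (S k).2.
  set x := lastle _ _ _.
  have [hx hxl hxu] : [/\ (x < N k)%N, C k p x <= r & r < C k p x.+1].
    by apply: lastle_spec => //; rewrite (hz k p hk hs hv).
  split => /=.
  - by rewrite size_rcons hs.
  - by apply: valid_rcons => //; rewrite hs.
  - rewrite big_ord_recr /= -/p -/r.
    have -> : take k (rcons p x) = p by rewrite -cats1 takel_cat -hs ?take_size.
    rewrite nth_rcons hs ltnn eqxx.
    have -> : \sum_(i < k) C i (take i (rcons p x)) (nth 0%N (rcons p x) i)
            = \sum_(i < k) C i (take i p) (nth 0%N p i).
      apply: eq_bigr => i _.
      rewrite -cats1 takel_cat ?hs ?(ltnW (ltn_ord i)) //.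
      by rewrite nth_cat hs ltn_ord.
    rewrite -hsum -/r; lra.
  - lra.
  - by exists x; split => //; lra.
have inv : forall k, (k < d)%N ->
  [/\ size (S k).1 = k, valid_prefix N (S k).1,
      Q - (S k).2 = \sum_(m < k) C m (take m (S k).1) (nth 0%N (S k).1 m),
      0 <= (S k).2 & (S k).2 < C k (S k).1 (N k)].
  elim=> [|k IH] hk.
  - rewrite /S /=; split => //; last by rewrite big_ord0 subrr.
  - have hk' : (k < d)%N by apply: ltnW.
    case: (IH hk') => hs hv hsum h0 hlt.
    case: (step k hk' hs hv hsum h0 hlt) => hs' hv' hsum' h0' [x [e hx hlt']].
    split => //.
    rewrite e.
    move: hlt'; rewrite (hcons k (S k).1 x hk hs hv hx) => hlt'.
    rewrite -(hs) ; move: hlt'; rewrite hs; lra.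
have hd1 : (d.-1 < d)%N by rewrite prednK.
case: (inv _ hd1) => hs hv hsum h0 hlt.
case: (step _ hd1 hs hv hsum h0 hlt) => hs' hv' hsum' h0' [x [e hx hlt']].
rewrite prednK // in hsum' h0'.
have -> : total_cost C d (hsp N C Q d) = Q - (S d).2.
  by rewrite hsum' /total_cost /hsp.
rewrite opprB addrC subrK; split => //.
rewrite prednK // in hlt'.
apply: (lt_le_trans hlt').
rewrite /Delta_last.
have hx' : x \in iota 0 (N d.-1) by rewrite mem_iota.
have hp' : (S d.-1).1 \in prefixes N d.-1 by rewrite -{2}hs; exact: valid_mem.
have h1 := le_bigmax_seq0 _ _ _ (fun y => C d.-1 (S d.-1).1 y.+1 - C d.-1 (S d.-1).1 y) _ hx'.
have h2 := le_bigmax_seq0 _ _ _ (fun p => \big[Num.max/0]_(y <- iota 0 (N d.-1)) (C d.-1 p y.+1 - C d.-1 p y)) _ hp'.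
exact: le_trans h1 h2.
Qed.
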